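(* For any connected graphs $G$ and $H$, $$\beta (G_{SR}\boxtimes H_{SR})\ge \beta ((G\boxtimes H)_{SR})\ge \beta(G_{SR}\oplus H_{SR}).$$
   Context: $\beta(F)$ denotes the independence number of a graph $F$ (largest size of a set of pairwise non-adjacent vertices). For a connected graph $G$ with shortest-path distance $d_G$: $u$ is maximally distant from $v$ if for every neighbor $w$ of $u$, $d_G(v,w)\le d_G(u,v)$; $u,v$ are mutually maximally distant if each is maximally distant from the other. The strong resolving graph $G_{SR}$ has vertex set $V(G)$, with $u,v$ adjacent iff they are mutually maximally distant in $G$. The strong product $G\boxtimes H$ has vertex set $V(G)\times V(H)$, with $(a,b)\sim(c,d)$ iff ($a=c$ and $bd\in E(H)$) or ($ac\in E(G)$ and $b=d$) or ($ac\in E(G)$ and $bd\in E(H)$). The Cartesian sum $G\oplus H$ has vertex set $V(G)\times V(H)$, with $(a,b)\sim(c,d)$ iff $ac\in E(G)$ or $bd\in E(H)$. *)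

(* Defs.v *)
From mathcomp Require Import all_boot.
Set Implicit Arguments. Unset Strict Implicit. Unset Printing Implicit Defensive.

Section Graphs.
Variable T : finType.
Implicit Types (e : rel T) (x y u v w : T).

Definition simple_graph e := symmetric e /\ irreflexive e.

Definition connected_graph e := forall x y, connect e x y.

Definition walk_of_len e (n : nat) x y : bool :=
  [exists p : n.-tuple T, path e x p && (last x p == y)].

(* shortest-path distance: least n with a walk of length n from x to y
   (for a connected graph this is < #|T|) *)
Definition dist e x y : nat :=
  find (fun n => walk_of_len e n x y) (iota 0 #|T|).

Definition max_dist_from e u v : bool :=
  [forall w, e u w ==> (dist e v w <= dist e u v)].

Definition mutually_max_dist e u v : bool :=
  max_dist_from e u v && max_dist_from e v u.

Definition strong_resolving_graph e : rel T :=
  fun u v => (u != v) && mutually_max_dist e u v.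

Definition independent e (S : {set T}) : bool :=
  [forall x in S, forall y in S, (x != y) ==> ~~ e x y].

Definition indep_number e : nat :=
  \max_(S : {set T} | independent e S) #|S|.
End Graphs.

Section Products.
Variables (V W : finType) (eG : rel V) (eH : rel W).

Definition strong_prod : rel (V * W) :=
  fun x y => [|| (x.1 == y.1) && eH x.2 y.2,
                 eG x.1 y.1 && (x.2 == y.2)
               | eG x.1 y.1 && eH x.2 y.2].

Definition cart_sum : rel (V * W) :=
  fun x y => eG x.1 y.1 || eH x.2 y.2.
End Products.

(* Main.v *)
Require Import Defs.
From mathcomp Require Import all_boot.
Set Implicit Arguments. Unset Strict Implicit. Unset Printing Implicit Defensive.

Section Dist.
Variable T : finType.
Variable e : rel T.

Definition lazyr : rel T := fun x y => (x == y) || e x y.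
Definition lpath n x y := exists p : seq T, size p = n /\ path lazyr x p /\ last x p = y.

Lemma walkP n x y : walk_of_len e n x y <-> exists p : seq T, size p = n /\ path e x p /\ last x p = y.
Proof.
split.
  by move=> /existsP[p /andP[Hp /eqP Hl]]; exists (val p); rewrite size_tuple.
move=> [p [Hs [Hp Hl]]]; apply/existsP.
have Hs' : size p == n by rewrite Hs.
by exists (Tuple Hs'); rewrite /= Hp Hl eqxx.
Qed.

Lemma size_shorten (x : T) p : size (shorten x p) <= size p.
Proof.
elim: p x => [|y p IH] x //=; case: ifP => _ /=.
  by apply: leq_trans (IH x) _.
by rewrite ltnS.
Qed.

Lemma walk_short k x y : walk_of_len e k x y ->
  exists k', [/\ k' <= k, k' < #|T| & walk_of_len e k' x y].
Proof.
move=> /walkP[p [Hs [Hp Hl]]].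
have Hsz := size_shorten x p.
move: Hsz Hl; case: (shortenP Hp) => p' Hp' Hu _ Hsz Hl.
exists (size p'); split.
- by rewrite -Hs.
- move/card_uniqP: Hu => Hc.
  by have := max_card (mem (x :: p')); rewrite Hc.
- by apply/walkP; exists p'.
Qed.

Lemma dist_walk k x y : walk_of_len e k x y ->
  dist e x y <= k /\ walk_of_len e (dist e x y) x y.
Proof.
move=> /walk_short[k' [Hk Hk' Hw]].
set a := fun n => walk_of_len e n x y.
have Hhas : has a (iota 0 #|T|).
  by apply/hasP; exists k'; rewrite ?mem_iota.
split.
  apply: leq_trans _ Hk; rewrite /dist -/a leqNgt; apply/negP => Hlt.
  have := before_find 0 Hlt; rewrite nth_iota // add0n.
  by rewrite /a Hw.
have := nth_find 0 Hhas; rewrite nth_iota; last by rewrite -[X in _ < X](size_iota 0 #|T|) -has_find.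
by rewrite add0n.
Qed.

Lemma lpath_pad n m x y : lpath n x y -> n <= m -> lpath m x y.
Proof.
move=> [p [Hs [Hp Hl]]] Hnm.
exists (p ++ nseq (m - n) y); split.
  by rewrite size_cat size_nseq Hs subnKC.
split; last first.
  by rewrite last_cat Hl; elim: (m - n).
rewrite cat_path Hp Hl /=; elim: (m - n) => //= k ->.
by rewrite /lazyr eqxx.
Qed.

Lemma lpath_walk n x y : lpath n x y -> exists k, k <= n /\ walk_of_len e k x y.
Proof.
move=> [p [Hs [Hp Hl]]]; subst n y.
elim: p x Hp => [|z p IH] x /=.
  by move=> _; exists 0; split => //; apply/walkP; exists [::].
move=> /andP[Hxz Hp]; have [k [Hk /walkP[q [Hq [Hqp Hql]]]]] := IH z Hp.
case/orP: Hxz => [/eqP ->|Hxz].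
  exists k; split; first exact: leqW.
  by apply/walkP; exists q.
exists k.+1; split => //; apply/walkP; exists (z :: q).
split; first by rewrite /= Hq.
by rewrite /= Hxz Hqp Hql.
Qed.

Lemma walk_lpath n x y : walk_of_len e n x y -> lpath n x y.
Proof.
move=> /walkP[p [Hs [Hp Hl]]]; exists p; split => //; split => //.
by apply: sub_path Hp => u v Huv; rewrite /lazyr Huv orbT.
Qed.

Lemma dist_le x y n : (exists k, walk_of_len e k x y) ->
  (dist e x y <= n <-> lpath n x y).
Proof.
move=> [k Hk]; have [_ Hd] := dist_walk Hk.
split.
  by move=> Hn; apply: lpath_pad Hn; apply: walk_lpath.
move=> /lpath_walk[k' [Hk' Hw]]; have [H _] := dist_walk Hw.
exact: leq_trans H Hk'.
Qed.

Lemma connect_walk x y : connect e x y -> exists k, walk_of_len e k x y.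
Proof.
by move=> /connectP[p Hp Hl]; exists (size p); apply/walkP; exists p.
Qed.

End Dist.
Section DistFacts.
Variable T : finType.
Variable e : rel T.
Hypothesis esym : symmetric e.

Definition reach x y := exists k, walk_of_len e k x y.

Lemma lpath_sym n x y : lpath e n x y -> lpath e n y x.
Proof.
move=> [p [Hs [Hp Hl]]]; subst n y.
elim: p x Hp => [|z p IH] x /=.
  by move=> _; exists [::].
move=> /andP[Hxz Hp]; have [q [Hq [Hqp Hql]]] := IH z Hp.
exists (rcons q x); split; first by rewrite size_rcons Hq.
split; last by rewrite last_rcons.
rewrite rcons_path Hqp Hql /=.
by move: Hxz; rewrite /lazyr eq_sym esym.
Qed.

Lemma dist_sym x y : reach x y -> reach y x -> dist e x y = dist e y x.
Proof.
move=> Rxy Ryx; apply/eqP; rewrite eqn_leq; apply/andP; split.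
  by apply/(dist_le _ Rxy); apply: lpath_sym; apply/(dist_le _ Ryx).
by apply/(dist_le _ Ryx); apply: lpath_sym; apply/(dist_le _ Rxy).
Qed.

Lemma dist_self x : dist e x x = 0.
Proof.
have R : reach x x by exists 0; apply/walkP; exists [::].
by apply/eqP; rewrite -leqn0; apply/(dist_le _ R); exists [::].
Qed.

Lemma dist0 x y : reach x y -> dist e x y = 0 -> x = y.
Proof.
move=> R H; have : dist e x y <= 0 by rewrite H.
by move/(dist_le _ R) => [p [Hs [_ Hl]]]; case: p Hs Hl.
Qed.

Lemma dist_nb x y : reach x y -> (x == y) || e x y -> dist e x y <= 1.
Proof.
move=> R H; apply/(dist_le _ R); exists [:: y]; split => //=.
by rewrite /lazyr H.
Qed.

End DistFacts.

Section Prod.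
Variables (V W : finType) (eG : rel V) (eH : rel W).
Notation P := (strong_prod eG eH).

Lemma lazy_prod x y : lazyr P x y = lazyr eG x.1 y.1 && lazyr eH x.2 y.2.
Proof.
case: x y => [a b] [c d]; rewrite /lazyr /strong_prod /= xpair_eqE.
by case: (a == c); case: (b == d); case: (eG a c); case: (eH b d).
Qed.

Lemma lpath_prod n a b c d :
  lpath P n (a, b) (c, d) <-> lpath eG n a c /\ lpath eH n b d.
Proof.
split.
  move=> [p [Hs [Hp Hl]]]; split.
    exists (map fst p); split; first by rewrite size_map.
    split; last by rewrite (last_map fst p (a, b)) Hl.
    rewrite -[a]/((a, b).1) path_map; apply: sub_path Hp => u v.
    by rewrite lazy_prod => /andP[].
  exists (map snd p); split; first by rewrite size_map.
  split; last by rewrite (last_map snd p (a, b)) Hl.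
  rewrite -[b]/((a, b).2) path_map; apply: sub_path Hp => u v.
  by rewrite lazy_prod => /andP[].
move=> [[p [Hs [Hp Hl]]] [q [Hq [Hqp Hql]]]].
exists (zip p q); split; first by rewrite size_zip Hs Hq minnn.
subst c d; rewrite -Hq in Hs; clear Hq.
elim: p q a b Hs Hp Hqp => [|z p IH] [|z' q] a b //= [Hs] /andP[H1 Hp] /andP[H2 Hqp].
have [IH1 IH2] := IH q z z' Hs Hp Hqp.
by rewrite lazy_prod /= H1 H2 IH1.
Qed.

Lemma reach_prod a b c d : reach eG a c -> reach eH b d -> reach P (a, b) (c, d).
Proof.
move=> RG RH.
have LG : lpath eG (maxn (dist eG a c) (dist eH b d)) a c.
  by apply/(dist_le _ RG); apply: leq_maxl.
have LH : lpath eH (maxn (dist eG a c) (dist eH b d)) b d.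
  by apply/(dist_le _ RH); apply: leq_maxr.
have [k [_ Hk]] := lpath_walk (proj2 (lpath_prod _ a b c d) (conj LG LH)).
by exists k.
Qed.

Lemma dist_prod a b c d : reach eG a c -> reach eH b d ->
  dist P (a, b) (c, d) = maxn (dist eG a c) (dist eH b d).
Proof.
move=> RG RH; have RP := reach_prod RG RH.
apply/eqP; rewrite eqn_leq; apply/andP; split.
  apply/(dist_le _ RP); apply/lpath_prod; split.
    by apply/(dist_le _ RG); apply: leq_maxl.
  by apply/(dist_le _ RH); apply: leq_maxr.
have /(dist_le _ RP) /lpath_prod [LG LH] := leqnn (dist P (a, b) (c, d)).
by rewrite geq_max; apply/andP; split; [apply/(dist_le _ RG) | apply/(dist_le _ RH)].
Qed.

End Prod.

Lemma indep_mono (T : finType) (e1 e2 : rel T) :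
  (forall x y, e2 x y -> e1 x y) -> indep_number e1 <= indep_number e2.
Proof.
move=> H; apply/bigmax_leqP => S HS; apply: leq_bigmax_cond.
apply/forall_inP => x Hx; apply/forall_inP => y Hy; apply/implyP => Hxy.
apply/negP => He.
move/forall_inP: HS => /(_ x Hx) /forall_inP /(_ y Hy) /implyP /(_ Hxy).
by rewrite (H _ _ He).
Qed.
Section Coord.
Variable T : finType.
Variable e : rel T.
Hypothesis esym : symmetric e.
Hypothesis econn : connected_graph e.

Lemma Rall x y : reach e x y.
Proof. exact: connect_walk (econn x y). Qed.

Lemma coord_md u v u' : max_dist_from e u v -> (u == u') || e u u' ->
  dist e v u' <= dist e u v.
Proof.
move=> M; case: eqP => [<- _|_ /= H].
  by rewrite (dist_sym esym (Rall v u) (Rall u v)).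
by move/forallP: M => /(_ u') /implyP /(_ H).
Qed.

Lemma SR_sym u v : strong_resolving_graph e u v = strong_resolving_graph e v u.
Proof.
rewrite /strong_resolving_graph /mutually_max_dist eq_sym; congr (_ && _).
exact: andbC.
Qed.

Lemma SR_pos u v : strong_resolving_graph e u v -> 0 < dist e u v.
Proof.
move=> /andP[N _]; rewrite lt0n; apply/negP => /eqP H.
by move: N; rewrite (dist0 (Rall u v) H) eqxx.
Qed.

End Coord.

Section Main.
Variables (V W : finType) (eG : rel V) (eH : rel W).
Hypotheses (sG : simple_graph eG) (sH : simple_graph eH)
  (cG : connected_graph eG) (cH : connected_graph eH).
Notation P := (strong_prod eG eH).
Notation SG := (strong_resolving_graph eG).
Notation SH := (strong_resolving_graph eH).

Lemma nbr_prod x w : P x w -> ((x.1 == w.1) || eG x.1 w.1) && ((x.2 == w.2) || eH x.2 w.2).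
Proof. by move=> H; rewrite -lazy_prod /lazyr H orbT. Qed.

Lemma DP a b c d : dist P (a, b) (c, d) = maxn (dist eG a c) (dist eH b d).
Proof. exact: dist_prod (Rall cG a c) (Rall cH b d). Qed.

Lemma inc1_md x y : strong_prod SG SH x y -> max_dist_from P x y.
Proof.
case: x y => [a b] [c d] Hxy.
apply/forallP => [[a' b']]; apply/implyP => /nbr_prod /= /andP[Ha Hb].
rewrite !DP geq_max; move: Hxy; rewrite /strong_prod /= => Hxy.
case/or3P: Hxy => [/andP[/eqP Eac Sbd] | /andP[Sac /eqP Ebd] | /andP[Sac Sbd]].
- subst c; rewrite dist_self max0n.
  have Pb := SR_pos cH Sbd.
  move/andP: Sbd => [_ /andP[Mbd _]].
  rewrite (coord_md sH.1 cH Mbd Hb) andbT.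
  exact: leq_trans (dist_nb (Rall cG a a') Ha) Pb.
- subst d; rewrite dist_self maxn0.
  have Pa := SR_pos cG Sac.
  move/andP: Sac => [_ /andP[Mac _]].
  rewrite (coord_md sG.1 cG Mac Ha) /=.
  exact: leq_trans (dist_nb (Rall cH b b') Hb) Pa.
- move/andP: Sac => [_ /andP[Mac _]]; move/andP: Sbd => [_ /andP[Mbd _]].
  rewrite (leq_trans (coord_md sG.1 cG Mac Ha) (leq_maxl _ _)) /=.
  exact: (leq_trans (coord_md sH.1 cH Mbd Hb) (leq_maxr _ _)).
Qed.

Lemma inc1 x y : strong_prod SG SH x y -> strong_resolving_graph P x y.
Proof.
move=> H; apply/andP; split.
  case: x y H => [a b] [c d].
  case/or3P => [/andP[_ /andP[N _]] | /andP[/andP[N _] _] | /andP[/andP[N _] _]];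
    by apply/negP => /eqP [E1 E2]; move: N; rewrite ?E1 ?E2 eqxx.
apply/andP; split; first exact: inc1_md.
apply: inc1_md; move: x y H => [a b] [c d].
by rewrite /strong_prod /= (SR_sym eG a c) (SR_sym eH b d) (eq_sym a) (eq_sym b).
Qed.

Lemma inc2 x y : strong_resolving_graph P x y -> cart_sum SG SH x y.
Proof.
case: x y => [a b] [c d] /andP[Nxy /andP[Mxy Myx]]; rewrite /cart_sum /=.
have Sac := dist_sym sG.1 (Rall cG a c) (Rall cG c a).
have Sbd := dist_sym sH.1 (Rall cH b d) (Rall cH d b).
have Dxy := DP a b c d; have Dyx := DP c d a b.
rewrite -Sac -Sbd in Dyx.
case: (leqP (dist eH b d) (dist eG a c)) => Hle.
- rewrite (maxn_idPl Hle) in Dxy Dyx.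
  apply/orP; left; apply/andP; split.
    apply/negP => /eqP Eac; subst c.
    move: Hle; rewrite dist_self leqn0 => /eqP /(dist0 (Rall cH b d)) Ebd.
    by move: Nxy; rewrite Ebd eqxx.
  apply/andP; split.
    apply/forallP => a'; apply/implyP => Ha'.
    have HP : P (a, b) (a', b).
      by apply/orP; right; apply/orP; left; rewrite /= Ha' eqxx.
    move/forallP: Mxy => /(_ (a', b)) /implyP /(_ HP).
    by rewrite DP Dxy geq_max => /andP[].
  apply/forallP => c'; apply/implyP => Hc'.
  have HP : P (c, d) (c', d).
    by apply/orP; right; apply/orP; left; rewrite /= Hc' eqxx.
  move/forallP: Myx => /(_ (c', d)) /implyP /(_ HP).
  by rewrite DP Dyx geq_max Sac => /andP[].
- rewrite (maxn_idPr (ltnW Hle)) in Dxy Dyx.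
  apply/orP; right; apply/andP; split.
    apply/negP => /eqP Ebd; subst d.
    by move: Hle; rewrite dist_self ltn0.
  apply/andP; split.
    apply/forallP => b'; apply/implyP => Hb'.
    have HP : P (a, b) (a, b').
      by apply/orP; left; rewrite /= Hb' eqxx.
    move/forallP: Mxy => /(_ (a, b')) /implyP /(_ HP).
    by rewrite DP Dxy geq_max => /andP[].
  apply/forallP => d'; apply/implyP => Hd'.
  have HP : P (c, d) (c, d').
    by apply/orP; left; rewrite /= Hd' eqxx.
  move/forallP: Myx => /(_ (c, d')) /implyP /(_ HP).
  by rewrite DP Dyx geq_max Sbd => /andP[].
Qed.

End Main.

Theorem corollary8 (V W : finType) (eG : rel V) (eH : rel W) :
  simple_graph eG -> simple_graph eH ->
  connected_graph eG -> connected_graph eH ->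
  indep_number (strong_prod (strong_resolving_graph eG) (strong_resolving_graph eH))
    >= indep_number (strong_resolving_graph (strong_prod eG eH))
  /\ indep_number (strong_resolving_graph (strong_prod eG eH))
    >= indep_number (cart_sum (strong_resolving_graph eG) (strong_resolving_graph eH)).
Proof.
move=> sG sH cG cH; split; apply: indep_mono => x y.
  exact: inc1.
exact: inc2.
Qed.
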